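(* In system $\mathscr{E}$: if $\Phi'\triangleright\Gamma\vdash^{(b',e',m',f')}t':\sigma$ and $t\to_h t'$ by a step of kind $\mathcal{R}\in\{b,e,m\}$, then there is a derivation $\Phi\triangleright\Gamma\vdash^{(b,e,m,f)}t:\sigma$ where: if $\mathcal{R}=b$ then $b=b'+1$, $e'=e$, $m'=m$; if $\mathcal{R}=e$ then $b'=b$, $e=e'+1$, $m'=m$; if $\mathcal{R}=m$ then $b'=b$, $e'=e$, $m=m'+1$.
   Context: Pair pattern calculus: patterns $p,q ::= x\mid\langle p,q\rangle$ (linear); $\mathrm{var}(p)$ = variables of $p$; $p\# q$ means disjoint variables. Terms $t,u ::= x\mid\lambda p.t\mid\langle t,u\rangle\mid t\,u\mid t[p/u]$, $\mathrm{var}(p)$ bound in $t$ in $\lambda p.t$ and $t[p/u]$; $\mathrm{fv}$ as usual; terms modulo $\alpha$. List contexts $L::=\Box\mid L[p/u]$, $L\langle t\rangle$ plugging (possibly capturing), $\mathrm{bv}(L)$ variables bound by $L$; $t\{x/u\}$ capture-avoiding substitution; $\mathrm{abs}(t)$ iff $t=L\langle\lambda p.u\rangle$. Head reduction ($t\not\to_h$: no $u$ with $t\to_h u$): (b) $L\langle\lambda p.t\rangle u\to_h L\langle t[p/u]\rangle$ if $\mathrm{bv}(L)\cap\mathrm{fv}(u)=\emptyset$; (m) $t[\langle p_1,p_2\rangle/L\langle\langle u_1,u_2\rangle\rangle]\to_h L\langle t[p_1/u_1][p_2/u_2]\rangle$ if $t\not\to_h$ and $\mathrm{bv}(L)\cap\mathrm{fv}(t)=\emptyset$;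 (e) $t[x/u]\to_h t\{x/u\}$ if $t\not\to_h$; closure: $\lambda p.t\to_h\lambda p.t'$ if $t\to_h t'$; $tu\to_h t'u$ if $t\to_h t'$ and not $\mathrm{abs}(t)$; $t[p/u]\to_h t'[p/u]$ if $t\to_h t'$; $t[p/u]\to_h t[p/u']$ if $t\not\to_h$, $p$ not a variable, $u\to_h u'$. The kind of a step is the base rule (b), (e) or (m) it uses. System $\mathscr{E}$. Types: tight types $\mathtt{t} ::= \bullet_{\mathcal{N}}\mid\bullet_{\mathcal{M}}$; types $\sigma ::= \mathtt{t}\mid \mathcal{A}_1\times\mathcal{A}_2\mid \mathcal{A}\to\sigma$; multi-types $\mathcal{A} ::= [\sigma_k]_{k\in K}$ (finite, possibly empty). Contexts map variables to multi-types, $\mathrm{dom}(\Gamma)$ = variables with non-empty multi-type; $\wedge$ pointwise multiset union; $\Gamma|_p$ restriction to $\mathrm{var}(p)$; $\Gamma\setminus\mathrm{var}(p)$ removal. $\mathrm{tight}(\sigma)$ iff $\sigma\in\{\bullet_{\mathcal{N}},\bullet_{\mathcal{M}}\}$, extended elementwise. Rules: (pat_v) $x:\mathcal{A}\Vdash^{(1,0,0)} x:\mathcal{A}$. (pat_×) from $\Gamma\Vdash^{(e_p,m_p,f_p)}p:\mathcal{A}$, $\Delta\Vdash^{(e_q,m_q,f_q)}q:\mathcal{B}$, $p\#q$ infer $\Gamma\wedge\Delta\Vdash^{(e_p+e_q,1+m_p+m_q,f_p+f_q)}\langle p,q\rangle:[\mathcal{A}\times\mathcal{B}]$. (pat_p)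 if $\mathrm{dom}(\Gamma)\subseteq\mathrm{var}(\langle p,q\rangle)$ and $\mathrm{tight}(\Gamma)$ then $\Gamma\Vdash^{(0,0,1)}\langle p,q\rangle:[\bullet_{\mathcal{N}}]$. (ax) $x:[\sigma]\vdash^{(0,0,0,0)}x:\sigma$. (abs) from $\Gamma\vdash^{(b,e,m,f)}t:\sigma$ and $\Gamma|_p\Vdash^{(e_p,m_p,f_p)}p:\mathcal{A}$ infer $\Gamma\setminus\mathrm{var}(p)\vdash^{(b+1,e+e_p,m+m_p,f+f_p)}\lambda p.t:\mathcal{A}\to\sigma$. (abs_p) from $\Gamma\vdash^{(b,e,m,f)}t:\mathtt{t}$ ($\mathtt{t}$ tight) and $\mathrm{tight}(\Gamma|_p)$ infer $\Gamma\setminus\mathrm{var}(p)\vdash^{(b,e,m,f+1)}\lambda p.t:\bullet_{\mathcal{M}}$. (many) from $(\Gamma_k\vdash^{(b_k,e_k,m_k,f_k)}t:\sigma_k)_{k\in K}$ infer $\wedge_k\Gamma_k\vdash^{(\sum b_k,\sum e_k,\sum m_k,\sum f_k)}t:[\sigma_k]_{k\in K}$. (app) from $\Gamma\vdash^{(b_t,e_t,m_t,f_t)}t:\mathcal{A}\to\sigma$, $\Delta\vdash^{(b_u,e_u,m_u,f_u)}u:\mathcal{A}$ infer $\Gamma\wedge\Delta\vdash^{(b_t+b_u,e_t+e_u,m_t+m_u,f_t+f_u)}t\,u:\sigma$. (app_p) from $\Gamma\vdash^{(b,e,m,f)}t:\bullet_{\mathcal{N}}$ infer $\Gamma\vdash^{(b,e,m,f+1)}t\,u:\bullet_{\mathcal{N}}$.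 (pair) from $\Gamma\vdash^{(b_t,e_t,m_t,f_t)}t:\mathcal{A}$, $\Delta\vdash^{(b_u,e_u,m_u,f_u)}u:\mathcal{B}$ infer $\Gamma\wedge\Delta\vdash^{(b_t+b_u,e_t+e_u,m_t+m_u,f_t+f_u)}\langle t,u\rangle:\mathcal{A}\times\mathcal{B}$. (pair_p) $\vdash^{(0,0,0,1)}\langle t,u\rangle:\bullet_{\mathcal{M}}$. (match) from $\Gamma\vdash^{(b_t,e_t,m_t,f_t)}t:\sigma$, $\Gamma|_p\Vdash^{(e_p,m_p,f_p)}p:\mathcal{A}$, $\Delta\vdash^{(b_u,e_u,m_u,f_u)}u:\mathcal{A}$ infer $(\Gamma\setminus\mathrm{var}(p))\wedge\Delta\vdash^{(b_t+b_u,e_t+e_u+e_p,m_t+m_u+m_p,f_t+f_u+f_p)}t[p/u]:\sigma$. *)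

(* Defs.v *)
From Stdlib Require Import List Arith.
Import ListNotations.

(* Patterns: the leaves of a pattern are its (anonymous, hence automatically
   linear) variables.  A pattern with n leaves binds n de Bruijn indices:
   the leaves, read left to right, are bound to indices 0, 1, ..., n-1. *)
Inductive pat : Type :=
| PVar : pat
| PPair : pat -> pat -> pat.

Fixpoint np (p : pat) : nat :=
  match p with
  | PVar => 1
  | PPair p q => np p + np q
  end.

(* Terms modulo alpha, as de Bruijn terms.  Sub t p u is t[p/u]. *)
Inductive term : Type :=
| Var : nat -> term
| Lam : pat -> term -> term
| Pair : term -> term -> term
| App : term -> term -> term
| Sub : term -> pat -> term -> term.

Fixpoint shift (d c : nat) (t : term) : term :=
  match t with
  | Var n => if c <=? n then Var (n + d) else Var n
  | Lam p t1 => Lam p (shift d (c + np p) t1)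
  | Pair t1 t2 => Pair (shift d c t1) (shift d c t2)
  | App t1 t2 => App (shift d c t1) (shift d c t2)
  | Sub t1 p t2 => Sub (shift d (c + np p) t1) p (shift d c t2)
  end.

Fixpoint subst (k : nat) (u : term) (t : term) : term :=
  match t with
  | Var n => if n <? k then Var n else if n =? k then shift k 0 u else Var (n - 1)
  | Lam p t1 => Lam p (subst (k + np p) u t1)
  | Pair t1 t2 => Pair (subst k u t1) (subst k u t2)
  | App t1 t2 => App (subst k u t1) (subst k u t2)
  | Sub t1 p t2 => Sub (subst (k + np p) u t1) p (subst k u t2)
  end.

(* t{x/u} where x is the variable bound by t[x/u] (index 0 of t) *)
Definition subst0 (t u : term) : term := subst 0 u t.

(* List contexts L ::= [] | L[p/u]; the head of the list is the outermost
   explicit substitution:  plug ((p,u) :: L) t = (plug L t)[p/u]. *)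
Definition lctx := list (pat * term).

Fixpoint plug (L : lctx) (t : term) : term :=
  match L with
  | [] => t
  | (p, u) :: L' => Sub (plug L' t) p u
  end.

Fixpoint nbv (L : lctx) : nat :=
  match L with
  | [] => 0
  | (p, _) :: L' => np p + nbv L'
  end.

Definition is_abs (t : term) : Prop :=
  exists (L : lctx) (p : pat) (u : term), t = plug L (Lam p u).

Inductive kind : Type := KB | KE | KM.

(* Every premise of every rule refers to ->_h only on immediate subterms of
   the left-hand side, so the relation (including its negative premises
   "t is head normal") is defined by structural recursion on s.
   The freshness side conditions of the named presentation are replaced by
   the corresponding de Bruijn shifts. *)
Fixpoint hred (s : term) (k : kind) (s' : term) {struct s} : Prop :=
  match s with
  | Var _ => False
  | Pair _ _ => False
  | Lam p t =>
      exists t', s' = Lam p t' /\ hred t k t'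
  | App t u =>
      (k = KB /\ exists (L : lctx) (p : pat) (r : term),
          t = plug L (Lam p r) /\ s' = plug L (Sub r p (shift (nbv L) 0 u)))
      \/
      (exists t', s' = App t' u /\ hred t k t' /\ ~ is_abs t)
  | Sub t p u =>
      (k = KM /\ ~ (exists k0 t0, hred t k0 t0) /\
        exists (p1 p2 : pat) (L : lctx) (u1 u2 : term),
          p = PPair p1 p2 /\ u = plug L (Pair u1 u2) /\
          s' = plug L (Sub (Sub (shift (nbv L) (np p1 + np p2) t) p1
                                (shift (np p2) 0 u1)) p2 u2))
      \/
      (k = KE /\ ~ (exists k0 t0, hred t k0 t0) /\ p = PVar /\ s' = subst0 t u)
      \/
      (exists t', s' = Sub t' p u /\ hred t k t')
      \/
      (~ (exists k0 t0, hred t k0 t0) /\ p <> PVar /\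
        exists u', s' = Sub t p u' /\ hred u k u')
  end.

(* TN = bullet_N, TM = bullet_M; multi-types are lists considered up to
   permutation (see teq / mteq below). *)
Inductive ty : Type :=
| TN : ty
| TM : ty
| TProd : list ty -> list ty -> ty
| TArr : list ty -> ty -> ty.

Definition mty := list ty.

Inductive teq : ty -> ty -> Prop :=
| teq_N : teq TN TN
| teq_M : teq TM TM
| teq_prod A1 A2 B1 B2 : mteq A1 A2 -> mteq B1 B2 -> teq (TProd A1 B1) (TProd A2 B2)
| teq_arr A1 A2 s1 s2 : mteq A1 A2 -> teq s1 s2 -> teq (TArr A1 s1) (TArr A2 s2)
with mteq : mty -> mty -> Prop :=
| mteq_nil : mteq [] []
| mteq_cons s1 s2 A1 A2 : teq s1 s2 -> mteq A1 A2 -> mteq (s1 :: A1) (s2 :: A2)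
| mteq_swap s1 s2 A : mteq (s1 :: s2 :: A) (s2 :: s1 :: A)
| mteq_trans A1 A2 A3 : mteq A1 A2 -> mteq A2 A3 -> mteq A1 A3.

Definition tight (s : ty) : Prop := s = TN \/ s = TM.
Definition tight_mt (A : mty) : Prop := Forall tight A.

(* Typing contexts: de Bruijn index -> multi-type (empty list = not in dom). *)
Definition ctx := nat -> mty.
Definition ctx_empty : ctx := fun _ => [].
Definition ctx_eq (G D : ctx) : Prop := forall i, mteq (G i) (D i).
Definition ctx_and (G D : ctx) : ctx := fun i => G i ++ D i.
Definition ctx_one (x : nat) (A : mty) : ctx := fun i => if i =? x then A else [].
Definition ctx_restr (G : ctx) (n : nat) : ctx := fun i => if i <? n then G i else [].
Definition ctx_rem (G : ctx) (n : nat) : ctx := fun i => G (i + n).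
(* Gamma /\ Delta for the pattern <p,q> : Gamma on var(p) (indices < n),
   Delta on var(q) (indices >= n, locally numbered from 0) *)
Definition ctx_pjoin (n : nat) (G D : ctx) : ctx :=
  fun i => if i <? n then G i else D (i - n).
Definition ctx_tight (G : ctx) : Prop := forall i, tight_mt (G i).

Inductive ptyp : ctx -> pat -> mty -> nat -> nat -> nat -> Prop :=
| pat_v A : ptyp (ctx_one 0 A) PVar A 1 0 0
| pat_x G D p q A B ep mp fp eq mq fq :
    ptyp G p A ep mp fp -> ptyp D q B eq mq fq ->
    ptyp (ctx_pjoin (np p) G D) (PPair p q) [TProd A B]
         (ep + eq) (1 + mp + mq) (fp + fq)
| pat_p G p q :
    (forall i, np (PPair p q) <= i -> G i = []) -> ctx_tight G ->
    ptyp G (PPair p q) [TN] 0 0 1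
| pat_eq G G' p A A' e m f :
    ptyp G p A e m f -> ctx_eq G G' -> mteq A A' -> ptyp G' p A' e m f.

Inductive typ : ctx -> term -> ty -> nat -> nat -> nat -> nat -> Prop :=
| ty_ax x s : typ (ctx_one x [s]) (Var x) s 0 0 0 0
| ty_abs G p t s A b e m f ep mp fp :
    typ G t s b e m f -> ptyp (ctx_restr G (np p)) p A ep mp fp ->
    typ (ctx_rem G (np p)) (Lam p t) (TArr A s) (b + 1) (e + ep) (m + mp) (f + fp)
| ty_abs_p G p t s b e m f :
    typ G t s b e m f -> tight s -> (forall i, i < np p -> tight_mt (G i)) ->
    typ (ctx_rem G (np p)) (Lam p t) TM b e m (f + 1)
| ty_app G D t u A s bt et mt ft bu eu mu fu :
    typ G t (TArr A s) bt et mt ft -> mtyp D u A bu eu mu fu ->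
    typ (ctx_and G D) (App t u) s (bt + bu) (et + eu) (mt + mu) (ft + fu)
| ty_app_p G t u b e m f :
    typ G t TN b e m f -> typ G (App t u) TN b e m (f + 1)
| ty_pair G D t u A B bt et mt ft bu eu mu fu :
    mtyp G t A bt et mt ft -> mtyp D u B bu eu mu fu ->
    typ (ctx_and G D) (Pair t u) (TProd A B) (bt + bu) (et + eu) (mt + mu) (ft + fu)
| ty_pair_p t u : typ ctx_empty (Pair t u) TM 0 0 0 1
| ty_match G D t p u s A bt et mt ft ep mp fp bu eu mu fu :
    typ G t s bt et mt ft -> ptyp (ctx_restr G (np p)) p A ep mp fp ->
    mtyp D u A bu eu mu fu ->
    typ (ctx_and (ctx_rem G (np p)) D) (Sub t p u) s
        (bt + bu) (et + eu + ep) (mt + mu + mp) (ft + fu + fp)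
| ty_eq G G' t s s' b e m f :
    typ G t s b e m f -> ctx_eq G G' -> teq s s' -> typ G' t s' b e m f
with mtyp : ctx -> term -> mty -> nat -> nat -> nat -> nat -> Prop :=
| many_nil t : mtyp ctx_empty t [] 0 0 0 0
| many_cons G D t s A b1 e1 m1 f1 b2 e2 m2 f2 :
    typ G t s b1 e1 m1 f1 -> mtyp D t A b2 e2 m2 f2 ->
    mtyp (ctx_and G D) t (s :: A) (b1 + b2) (e1 + e2) (m1 + m2) (f1 + f2)
| many_eq G G' t A A' b e m f :
    mtyp G t A b e m f -> ctx_eq G G' -> mteq A A' -> mtyp G' t A' b e m f.

(* Main.v *)
Require Import Defs.
From Stdlib Require Import List Arith Lia Permutation Setoid Morphisms.
Import ListNotations.

Fixpoint teq_refl (s : ty) : teq s s :=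
  match s return teq s s with
  | TN => teq_N
  | TM => teq_M
  | TProd A B =>
      teq_prod A A B B
        ((fix F (l : list ty) : mteq l l := match l with [] => mteq_nil | x :: l' => mteq_cons x x l' l' (teq_refl x) (F l') end) A)
        ((fix F (l : list ty) : mteq l l := match l with [] => mteq_nil | x :: l' => mteq_cons x x l' l' (teq_refl x) (F l') end) B)
  | TArr A s0 => teq_arr A A s0 s0
        ((fix F (l : list ty) : mteq l l := match l with [] => mteq_nil | x :: l' => mteq_cons x x l' l' (teq_refl x) (F l') end) A)
        (teq_refl s0)
  end.

Lemma mteq_refl A : mteq A A.
Proof. induction A; constructor; auto using teq_refl. Qed.

Scheme teq_mut := Induction for teq Sort Prop with mteq_mut := Induction for mteq Sort Prop.
Combined Scheme teq_comb from teq_mut, mteq_mut.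

Lemma teq_mteq_sym : (forall a b, teq a b -> teq b a) /\ (forall A B, mteq A B -> mteq B A).
Proof.
  apply teq_comb; intros; try solve [constructor; auto].
  eapply mteq_trans; eauto.
Qed.
Lemma teq_sym a b : teq a b -> teq b a. Proof. apply teq_mteq_sym. Qed.
Lemma mteq_sym a b : mteq a b -> mteq b a. Proof. apply teq_mteq_sym. Qed.

Lemma teq_trans a b c : teq a b -> teq b c -> teq a c.
Proof.
  intros H; revert c; induction H; intros c H'; inversion H'; subst; constructor;
  eauto using mteq_trans.
Qed.

#[global] Instance mteq_Equiv : Equivalence mteq.
Proof. split; red; eauto using mteq_refl, mteq_sym, mteq_trans. Qed.
#[global] Instance teq_Equiv : Equivalence teq.
Proof. split; red; eauto using teq_refl, teq_sym, teq_trans. Qed.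

Lemma perm_mteq l l' : Permutation l l' -> mteq l l'.
Proof.
  induction 1.
  - constructor.
  - constructor; auto using teq_refl.
  - apply mteq_swap.
  - eapply mteq_trans; eauto.
Qed.

Lemma mteq_app A A' B B' : mteq A A' -> mteq B B' -> mteq (A ++ B) (A' ++ B').
Proof.
  intros H; revert B B'; induction H; intros B B' HB; simpl.
  - auto.
  - constructor; auto.
  - apply mteq_trans with (s2 :: s1 :: A ++ B); [apply mteq_swap|]. apply mteq_cons; [apply teq_refl|]. apply mteq_cons; [apply teq_refl|]. clear -HB; induction A; simpl; auto; constructor; auto using teq_refl.
  - eapply mteq_trans; [apply (IHmteq1 B B); apply mteq_refl| auto].
Qed.

#[global] Instance app_mteq_Proper : Proper (mteq ==> mteq ==> mteq) (@app ty).
Proof. repeat intro; apply mteq_app; auto. Qed.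

Lemma mteq_length A B : mteq A B -> length A = length B.
Proof. induction 1; simpl; congruence. Qed.

Lemma tight_teq a b : teq a b -> tight a -> tight b.
Proof. intros H [->| ->]; inversion H; subst; red; auto. Qed.


Lemma tight_mteq A B : mteq A B -> tight_mt A -> tight_mt B.
Proof.
  unfold tight_mt; induction 1; intros HF; auto.
  - inversion HF; subst; constructor; eauto using tight_teq.
  - inversion HF as [|? ? Ha HF']; subst. inversion HF' as [|? ? Hb HF'']; subst.
    constructor; [auto| constructor; auto].
Qed.

Definition ctx_shift (d c : nat) (G : ctx) : ctx :=
  fun i => if i <? c then G i else if i <? c + d then [] else G (i - d).
Definition ctx_del (k : nat) (G : ctx) : ctx :=
  fun i => if i <? k then G i else G (S i).

#[global] Instance ctx_eq_Equiv : Equivalence ctx_eq.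
Proof.
  unfold ctx_eq; split; red; intros.
  - reflexivity.
  - symmetry; auto.
  - etransitivity; eauto.
Qed.

#[global] Instance ctx_and_Proper : Proper (ctx_eq ==> ctx_eq ==> ctx_eq) ctx_and.
Proof. unfold ctx_eq, ctx_and; repeat intro. apply mteq_app; auto. Qed.
#[global] Instance ctx_rem_Proper : Proper (ctx_eq ==> eq ==> ctx_eq) ctx_rem.
Proof. unfold ctx_eq, ctx_rem; repeat intro; subst; auto. Qed.
#[global] Instance ctx_restr_Proper : Proper (ctx_eq ==> eq ==> ctx_eq) ctx_restr.
Proof. unfold ctx_eq, ctx_restr; repeat intro; subst; destruct (_ <? _); auto. reflexivity. Qed.
#[global] Instance ctx_shift_Proper : Proper (eq ==> eq ==> ctx_eq ==> ctx_eq) ctx_shift.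
Proof. unfold ctx_eq, ctx_shift; repeat intro; subst; repeat destruct (_ <? _); auto; reflexivity. Qed.
#[global] Instance ctx_del_Proper : Proper (eq ==> ctx_eq ==> ctx_eq) ctx_del.
Proof. unfold ctx_eq, ctx_del; repeat intro; subst; repeat destruct (_ <? _); auto. Qed.
#[global] Instance ctx_pjoin_Proper : Proper (eq ==> ctx_eq ==> ctx_eq ==> ctx_eq) ctx_pjoin.
Proof. unfold ctx_eq, ctx_pjoin; repeat intro; subst; repeat destruct (_ <? _); auto. Qed.

#[global] Instance typ_Proper : Proper (ctx_eq ==> eq ==> teq ==> eq ==> eq ==> eq ==> eq ==> iff) typ.
Proof. repeat intro; subst; split; intro; eapply ty_eq; eauto; symmetry; auto. Qed.
#[global] Instance mtyp_Proper : Proper (ctx_eq ==> eq ==> mteq ==> eq ==> eq ==> eq ==> eq ==> iff) mtyp.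
Proof. repeat intro; subst; split; intro; eapply many_eq; eauto; symmetry; auto. Qed.
#[global] Instance ptyp_Proper : Proper (ctx_eq ==> eq ==> mteq ==> eq ==> eq ==> eq ==> iff) ptyp.
Proof. repeat intro; subst; split; intro; eapply pat_eq; eauto; symmetry; auto. Qed.

Ltac rot_solve n :=
  match n with
  | O => fail
  | S ?n' =>
    repeat rewrite <- app_assoc; rewrite ?app_nil_l, ?app_nil_r;
    first [ reflexivity
          | match goal with |- Permutation (?a ++ _) (?a ++ _) => apply Permutation_app_head; rot_solve n end
          | eapply Permutation_trans; [| apply Permutation_app_comm]; rot_solve n' ]
  end.

Ltac cases := repeat match goal with
 | |- context [?a <? ?b] => destruct (Nat.ltb_spec a b)
 | |- context [?a =? ?b] => destruct (Nat.eqb_spec a b)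
 | |- context [?a <=? ?b] => destruct (Nat.leb_spec a b)
 end.

Ltac idx_norm :=
  repeat match goal with
  | |- context [?F ?a] => is_var F; match goal with
       | |- context [F ?b] => tryif constr_eq a b then fail else (let H := fresh in assert (H : F b = F a) by (f_equal; lia); rewrite H; clear H)
       end
  end.

Ltac ctx_solve :=
  let i := fresh "i" in
  unfold ctx_eq; intro i;
  unfold ctx_and, ctx_rem, ctx_restr, ctx_one, ctx_shift, ctx_del, ctx_pjoin, ctx_empty;
  cases; try (exfalso; lia); idx_norm; apply perm_mteq; rot_solve 8.

Lemma test (G D : ctx) n : ctx_eq (ctx_and (ctx_rem (ctx_shift n 0 G) n) D) (ctx_and D G).
Proof. ctx_solve. Qed.

Scheme typ_mut := Induction for typ Sort Prop with mtyp_mut := Induction for mtyp Sort Prop.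
Combined Scheme typ_mtyp_mut from typ_mut, mtyp_mut.

Ltac novar H :=
  repeat match type of H with
  | context [if ?c then _ else _] => destruct c
  end; discriminate H.

Lemma anti_shift :
 (forall G t s b e m f, typ G t s b e m f -> forall d c u, t = shift d c u ->
    exists G0, typ G0 u s b e m f /\ ctx_eq G (ctx_shift d c G0)) /\
 (forall G t A b e m f, mtyp G t A b e m f -> forall d c u, t = shift d c u ->
    exists G0, mtyp G0 u A b e m f /\ ctx_eq G (ctx_shift d c G0)).
Proof.
  apply typ_mtyp_mut.
  -
    intros x s d c u H.
    destruct u; simpl in H; try discriminate H.
    exists (ctx_one n [s]); split; [constructor|].
    destruct (Nat.leb_spec c n); injection H; intros; subst; ctx_solve.
  -
    intros G p t s A b e m f ep mp fp Ht IH Hp d c u Heq.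
    destruct u as [n|p' u1|u1 u2|u1 u2|u1 p' u2]; simpl in Heq; try novar Heq; try discriminate Heq.
    injection Heq as Hp' Ht'; subst p' t.
    destruct (IH d (c + np p) u1 eq_refl) as [G0 [Ht0 HG]].
    exists (ctx_rem G0 (np p)); split.
    + apply ty_abs; auto. rewrite HG in Hp.
      assert (E : ctx_eq (ctx_restr (ctx_shift d (c + np p) G0) (np p)) (ctx_restr G0 (np p))) by ctx_solve.
      rewrite E in Hp; exact Hp.
    + rewrite HG; ctx_solve.
  -
    intros G p t s b e m f Ht IH Hs Htt d c u Heq.
    destruct u as [n|p' u1|u1 u2|u1 u2|u1 p' u2]; simpl in Heq; try novar Heq; try discriminate Heq.
    injection Heq as Hp' Ht'; subst p' t.
    destruct (IH d (c + np p) u1 eq_refl) as [G0 [Ht0 HG]].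
    exists (ctx_rem G0 (np p)); split.
    + apply ty_abs_p with (s := s); auto. intros i Hi. eapply tight_mteq; [|apply (Htt i Hi)].
      rewrite (HG i). unfold ctx_shift. cases; try lia. reflexivity.
    + rewrite HG; ctx_solve.
  -
    intros G D t u A s bt et mt ft bu eu mu fu Ht IHt Hu IHu d c v Heq.
    destruct v as [n|p' u1|u1 u2|u1 u2|u1 p' u2]; simpl in Heq; try novar Heq; try discriminate Heq.
    injection Heq as Ht' Hu'; subst t u.
    destruct (IHt d c u1 eq_refl) as [G0 [Ht0 HG]].
    destruct (IHu d c u2 eq_refl) as [D0 [Hu0 HD]].
    exists (ctx_and G0 D0); split.
    + econstructor; eauto.
    + rewrite HG, HD; ctx_solve.
  -
    intros G t u b e m f Ht IHt d c v Heq.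
    destruct v as [n|p' u1|u1 u2|u1 u2|u1 p' u2]; simpl in Heq; try novar Heq; try discriminate Heq.
    injection Heq as Ht' Hu'; subst t u.
    destruct (IHt d c u1 eq_refl) as [G0 [Ht0 HG]].
    exists G0; split; auto. apply ty_app_p; auto.
  -
    intros G D t u A B bt et mt ft bu eu mu fu Ht IHt Hu IHu d c v Heq.
    destruct v as [n|p' u1|u1 u2|u1 u2|u1 p' u2]; simpl in Heq; try novar Heq; try discriminate Heq.
    injection Heq as Ht' Hu'; subst t u.
    destruct (IHt d c u1 eq_refl) as [G0 [Ht0 HG]].
    destruct (IHu d c u2 eq_refl) as [D0 [Hu0 HD]].
    exists (ctx_and G0 D0); split.
    + econstructor; eauto.
    + rewrite HG, HD; ctx_solve.
  -
    intros t u d c v Heq.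
    destruct v as [n|p' u1|u1 u2|u1 u2|u1 p' u2]; simpl in Heq; try novar Heq; try discriminate Heq.
    exists ctx_empty; split; [constructor|ctx_solve].
  -
    intros G D t p u s A bt et mt ft ep mp fp bu eu mu fu Ht IHt Hp Hu IHu d c v Heq.
    destruct v as [n|p' u1|u1 u2|u1 u2|u1 p' u2]; simpl in Heq; try novar Heq; try discriminate Heq.
    injection Heq as Ht' Hp' Hu'; subst p' t u.
    destruct (IHt d (c + np p) u1 eq_refl) as [G0 [Ht0 HG]].
    destruct (IHu d c u2 eq_refl) as [D0 [Hu0 HD]].
    exists (ctx_and (ctx_rem G0 (np p)) D0); split.
    + econstructor; eauto. rewrite HG in Hp.
      assert (E : ctx_eq (ctx_restr (ctx_shift d (c + np p) G0) (np p)) (ctx_restr G0 (np p))) by ctx_solve.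
      rewrite E in Hp; exact Hp.
    + rewrite HG, HD; ctx_solve.
  -
    intros G G' t s s' b e m f Ht IH HG' Hs d c u Heq.
    destruct (IH d c u Heq) as [G0 [Ht0 HG]].
    exists G0; split; [rewrite <- Hs; auto| rewrite <- HG'; auto].
  - intros t d c u Heq. exists ctx_empty; split; [constructor|ctx_solve].
  - intros G D t s A b1 e1 m1 f1 b2 e2 m2 f2 Ht IHt HA IHA d c u Heq.
    destruct (IHt d c u Heq) as [G0 [Ht0 HG]].
    destruct (IHA d c u Heq) as [D0 [Hu0 HD]].
    exists (ctx_and G0 D0); split.
    + econstructor; eauto.
    + rewrite HG, HD; ctx_solve.
  - intros G G' t A A' b e m f HA IH HG' HAA d c u Heq.
    destruct (IH d c u Heq) as [G0 [Ht0 HG]].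
    exists G0; split; [rewrite <- HAA; auto| rewrite <- HG'; auto].
Qed.

Lemma mtyp_app D1 u A1 b1 e1 m1 f1 D2 A2 b2 e2 m2 f2 :
  mtyp D1 u A1 b1 e1 m1 f1 -> mtyp D2 u A2 b2 e2 m2 f2 ->
  mtyp (ctx_and D1 D2) u (A1 ++ A2) (b1+b2) (e1+e2) (m1+m2) (f1+f2).
Proof.
  intros H; revert D2 A2 b2 e2 m2 f2; induction H; intros D2 A2 b2' e2' m2' f2' H2; simpl.
  - assert (E : ctx_eq (ctx_and ctx_empty D2) D2) by ctx_solve. rewrite E. exact H2.
  - assert (E : ctx_eq (ctx_and (ctx_and G D) D2) (ctx_and G (ctx_and D D2))) by ctx_solve.
    rewrite E. replace (b1 + b2 + b2') with (b1 + (b2 + b2')) by lia.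
    replace (e1 + e2 + e2') with (e1 + (e2 + e2')) by lia.
    replace (m1 + m2 + m2') with (m1 + (m2 + m2')) by lia.
    replace (f1 + f2 + f2') with (f1 + (f2 + f2')) by lia.
    econstructor; eauto.
  - rewrite <- H0, <- H1. auto.
Qed.

Definition AS_typ G s b e m f k u t0 :=
  exists G1 D A b1 e1 m1 f1 b2 e2 m2 f2,
    typ G1 t0 s b1 e1 m1 f1 /\ mteq (G1 k) A /\ mtyp D u A b2 e2 m2 f2 /\
    ctx_eq G (ctx_and (ctx_del k G1) (ctx_shift k 0 D)) /\
    b = b1 + b2 /\ e = e1 + e2 /\ m = m1 + m2 /\ f = f1 + f2.
Definition AS_mtyp G A' b e m f k u t0 :=
  exists G1 D A b1 e1 m1 f1 b2 e2 m2 f2,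
    mtyp G1 t0 A' b1 e1 m1 f1 /\ mteq (G1 k) A /\ mtyp D u A b2 e2 m2 f2 /\
    ctx_eq G (ctx_and (ctx_del k G1) (ctx_shift k 0 D)) /\
    b = b1 + b2 /\ e = e1 + e2 /\ m = m1 + m2 /\ f = f1 + f2.

Lemma subst_var_case G u s b e m f k :
  typ G (shift k 0 u) s b e m f -> AS_typ G s b e m f k u (Var k).
Proof.
  intros H. destruct (proj1 anti_shift _ _ _ _ _ _ _ H k 0 u eq_refl) as [G0 [H0 HG]].
  exists (ctx_one k [s]), (ctx_and G0 ctx_empty), [s], 0, 0, 0, 0, (b+0), (e+0), (m+0), (f+0).
  repeat split; try lia.
  - constructor.
  - unfold ctx_one; rewrite Nat.eqb_refl; reflexivity.
  - econstructor; eauto; constructor.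
  - rewrite HG; ctx_solve.
Qed.

Ltac var_handle Hd Heq :=
  match type of Heq with
  | _ = subst ?k ?u (Var ?n) =>
    simpl in Heq; destruct (Nat.eqb_spec n k) as [Hnk|Hne]; [subst n|];
    [ rewrite Nat.ltb_irrefl, ?Nat.eqb_refl in Heq; rewrite Heq in Hd; apply subst_var_case; exact Hd
    | destruct (n <? k); discriminate Heq ]
  end.

Lemma anti_subst :
 (forall G t s b e m f, typ G t s b e m f -> typ G t s b e m f -> forall k u t0, t = subst k u t0 ->
    AS_typ G s b e m f k u t0) /\
 (forall G t A b e m f, mtyp G t A b e m f -> mtyp G t A b e m f -> forall k u t0, t = subst k u t0 ->
    AS_mtyp G A b e m f k u t0).
Proof.
  apply typ_mtyp_mut.
  -
    intros x s Hd k u t0 Heq.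
    destruct t0 as [n|p' a|a c|a c|a p' c]; simpl in Heq; try discriminate Heq.
    destruct (Nat.eqb_spec n k) as [Hnk|Hne]; [subst n|].
    + rewrite Nat.ltb_irrefl, ?Nat.eqb_refl in Heq; rewrite Heq in Hd; apply subst_var_case; exact Hd.
    + exists (ctx_one n [s]), ctx_empty, [], 0, 0, 0, 0, 0, 0, 0, 0.
      repeat split; try lia.
      * constructor.
      * unfold ctx_one. apply Nat.eqb_neq in Hne. rewrite Nat.eqb_sym, Hne. reflexivity.
      * constructor.
      * 
        destruct (Nat.ltb_spec n k); injection Heq; intros; subst; ctx_solve.
  -
    intros G p t s A b e m f ep mp fp Ht IH Hp Hd k u t0 Heq.
    destruct t0 as [n|p' a|a c|a c|a p' c]; [var_handle Hd Heq| | | |]; simpl in Heq; try discriminate Heq.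
    injection Heq as Hp' Ht'; subst p' t.
    destruct (IH Ht (k + np p) u a eq_refl) as (G1&D&A'&b1&e1&m1&f1&b2&e2&m2&f2&Ha&HA&Hu&HG&->&->&->&->).
    exists (ctx_rem G1 (np p)), D, A', (b1+1), (e1+ep), (m1+mp), (f1+fp), b2, e2, m2, f2.
    repeat split; try lia.
    + apply ty_abs; auto. rewrite HG in Hp.
      assert (E : ctx_eq (ctx_restr (ctx_and (ctx_del (k + np p) G1) (ctx_shift (k + np p) 0 D)) (np p)) (ctx_restr G1 (np p))) by ctx_solve.
      rewrite E in Hp; exact Hp.
    + exact HA.
    + exact Hu.
    + rewrite HG; ctx_solve.
  -
    intros G p t s b e m f Ht IH Hs Htt Hd k u t0 Heq.
    destruct t0 as [n|p' a|a c|a c|a p' c]; [var_handle Hd Heq| | | |]; simpl in Heq; try discriminate Heq.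
    injection Heq as Hp' Ht'; subst p' t.
    destruct (IH Ht (k + np p) u a eq_refl) as (G1&D&A'&b1&e1&m1&f1&b2&e2&m2&f2&Ha&HA&Hu&HG&->&->&->&->).
    exists (ctx_rem G1 (np p)), D, A', b1, e1, m1, (f1+1), b2, e2, m2, f2.
    repeat split; try lia.
    + apply ty_abs_p with (s := s); auto. intros i Hi. eapply tight_mteq; [|apply (Htt i Hi)].
      rewrite (HG i). unfold ctx_and, ctx_del, ctx_shift. cases; try lia. rewrite app_nil_r. reflexivity.
    + exact HA.
    + exact Hu.
    + rewrite HG; ctx_solve.
  -
    intros G D t v A s bt et mt ft bu eu mu fu Ht IHt Hv IHv Hd k u t0 Heq.
    destruct t0 as [n|p' a|a c|a c|a p' c]; [var_handle Hd Heq| | | |]; simpl in Heq; try discriminate Heq.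
    injection Heq as Ht' Hv'; subst t v.
    destruct (IHt Ht k u a eq_refl) as (G1&D1&A1&b1&e1&m1&f1&b2&e2&m2&f2&Ha&HA1&Hu1&HG1&->&->&->&->).
    destruct (IHv Hv k u c eq_refl) as (G2&D2&A2&b3&e3&m3&f3&b4&e4&m4&f4&Hc&HA2&Hu2&HG2&->&->&->&->).
    exists (ctx_and G1 G2), (ctx_and D1 D2), (A1 ++ A2), (b1+b3), (e1+e3), (m1+m3), (f1+f3), (b2+b4), (e2+e4), (m2+m4), (f2+f4).
    repeat split; try lia.
    + econstructor; eauto.
    + unfold ctx_and at 1. apply mteq_app; auto.
    + apply mtyp_app; auto.
    + rewrite HG1, HG2; ctx_solve.
  -
    intros G t v b e m f Ht IHt Hd k u t0 Heq.
    destruct t0 as [n|p' a|a c|a c|a p' c]; [var_handle Hd Heq| | | |]; simpl in Heq; try discriminate Heq.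
    injection Heq as Ht' Hv'; subst t v.
    destruct (IHt Ht k u a eq_refl) as (G1&D1&A1&b1&e1&m1&f1&b2&e2&m2&f2&Ha&HA1&Hu1&HG1&->&->&->&->).
    exists G1, D1, A1, b1, e1, m1, (f1+1), b2, e2, m2, f2.
    repeat split; try lia; auto.
    apply ty_app_p; auto.
  -
    intros G D t v A B bt et mt ft bu eu mu fu Ht IHt Hv IHv Hd k u t0 Heq.
    destruct t0 as [n|p' a|a c|a c|a p' c]; [var_handle Hd Heq| | | |]; simpl in Heq; try discriminate Heq.
    injection Heq as Ht' Hv'; subst t v.
    destruct (IHt Ht k u a eq_refl) as (G1&D1&A1&b1&e1&m1&f1&b2&e2&m2&f2&Ha&HA1&Hu1&HG1&->&->&->&->).
    destruct (IHv Hv k u c eq_refl) as (G2&D2&A2&b3&e3&m3&f3&b4&e4&m4&f4&Hc&HA2&Hu2&HG2&->&->&->&->).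
    exists (ctx_and G1 G2), (ctx_and D1 D2), (A1 ++ A2), (b1+b3), (e1+e3), (m1+m3), (f1+f3), (b2+b4), (e2+e4), (m2+m4), (f2+f4).
    repeat split; try lia.
    + econstructor; eauto.
    + unfold ctx_and at 1. apply mteq_app; auto.
    + apply mtyp_app; auto.
    + rewrite HG1, HG2; ctx_solve.
  -
    intros t v Hd k u t0 Heq.
    destruct t0 as [n|p' a|a c|a c|a p' c]; [var_handle Hd Heq| | | |]; simpl in Heq; try discriminate Heq.
    exists ctx_empty, ctx_empty, [], 0, 0, 0, 1, 0, 0, 0, 0.
    repeat split; try lia.
    + constructor.
    + reflexivity.
    + constructor.
    + ctx_solve.
  -
    intros G D t p v s A bt et mt ft ep mp fp bu eu mu fu Ht IHt Hp Hv IHv Hd k u t0 Heq.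
    destruct t0 as [n|p' a|a c|a c|a p' c]; [var_handle Hd Heq| | | |]; simpl in Heq; try discriminate Heq.
    injection Heq as Ht' Hp' Hv'; subst p' t v.
    destruct (IHt Ht (k + np p) u a eq_refl) as (G1&D1&A1&b1&e1&m1&f1&b2&e2&m2&f2&Ha&HA1&Hu1&HG1&->&->&->&->).
    destruct (IHv Hv k u c eq_refl) as (G2&D2&A2&b3&e3&m3&f3&b4&e4&m4&f4&Hc&HA2&Hu2&HG2&->&->&->&->).
    exists (ctx_and (ctx_rem G1 (np p)) G2), (ctx_and D1 D2), (A1 ++ A2), (b1+b3), (e1+e3+ep), (m1+m3+mp), (f1+f3+fp), (b2+b4), (e2+e4), (m2+m4), (f2+f4).
    repeat split; try lia.
    + econstructor; eauto. rewrite HG1 in Hp.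
      assert (E : ctx_eq (ctx_restr (ctx_and (ctx_del (k + np p) G1) (ctx_shift (k + np p) 0 D1)) (np p)) (ctx_restr G1 (np p))) by ctx_solve.
      rewrite E in Hp; exact Hp.
    + unfold ctx_and at 1. apply mteq_app; auto.
    + apply mtyp_app; auto.
    + rewrite HG1, HG2; ctx_solve.
  -
    intros G G' t s s' b e m f Ht IH HG' Hs Hd k u t0 Heq.
    destruct (IH Ht k u t0 Heq) as (G1&D&A&b1&e1&m1&f1&b2&e2&m2&f2&Ha&HA&Hu&HG&->&->&->&->).
    exists G1, D, A, b1, e1, m1, f1, b2, e2, m2, f2.
    repeat split; auto.
    + rewrite <- Hs; auto.
    + rewrite <- HG'; auto.
  - intros t Hd k u t0 Heq.
    exists ctx_empty, ctx_empty, [], 0, 0, 0, 0, 0, 0, 0, 0.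
    repeat split; try lia.
    + constructor.
    + reflexivity.
    + constructor.
    + ctx_solve.
  - intros G D t s A b1' e1' m1' f1' b2' e2' m2' f2' Ht IHt HA' IHA Hd k u t0 Heq.
    destruct (IHt Ht k u t0 Heq) as (G1&D1&A1&b1&e1&m1&f1&b2&e2&m2&f2&Ha&HA1&Hu1&HG1&->&->&->&->).
    destruct (IHA HA' k u t0 Heq) as (G2&D2&A2&b3&e3&m3&f3&b4&e4&m4&f4&Hc&HA2&Hu2&HG2&->&->&->&->).
    exists (ctx_and G1 G2), (ctx_and D1 D2), (A1 ++ A2), (b1+b3), (e1+e3), (m1+m3), (f1+f3), (b2+b4), (e2+e4), (m2+m4), (f2+f4).
    repeat split; try lia.
    + econstructor; eauto.
    + unfold ctx_and at 1. apply mteq_app; auto.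
    + apply mtyp_app; auto.
    + rewrite HG1, HG2; ctx_solve.
  - intros G G' t A A' b e m f HA IH HG' HAA Hd k u t0 Heq.
    destruct (IH HA k u t0 Heq) as (G1&D&A1&b1&e1&m1&f1&b2&e2&m2&f2&Ha&HA1&Hu&HG&->&->&->&->).
    exists G1, D, A1, b1, e1, m1, f1, b2, e2, m2, f2.
    repeat split; auto.
    + rewrite <- HAA; auto.
    + rewrite <- HG'; auto.
Qed.

Lemma typ_cnt G t s b e m f b' e' m' f' :
  typ G t s b e m f -> b = b' -> e = e' -> m = m' -> f = f' -> typ G t s b' e' m' f'.
Proof. intros; subst; auto. Qed.

Lemma sub_inv G t p u s b e m f : typ G (Sub t p u) s b e m f ->
  exists Gt D A bt et mt ft ep mp fp bu eu mu fu,
    typ Gt t s bt et mt ft /\ ptyp (ctx_restr Gt (np p)) p A ep mp fp /\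
    mtyp D u A bu eu mu fu /\ ctx_eq G (ctx_and (ctx_rem Gt (np p)) D) /\
    b = bt + bu /\ e = et + eu + ep /\ m = mt + mu + mp /\ f = ft + fu + fp.
Proof.
  intros H; remember (Sub t p u) as T eqn:ET; revert t p u ET.
  induction H; intros t0 p0 u0 ET; try discriminate ET.
  - injection ET; intros; subst.
    do 14 eexists; repeat split; eauto; reflexivity.
  - destruct (IHtyp _ _ _ ET) as (Gt&D&A&bt&et&mt&ft&ep&mp&fp&bu&eu&mu&fu&K1&K2&K3&K4&K5&K6&K7&K8).
    do 14 eexists; repeat split; eauto.
    + rewrite <- H1; auto.
    + rewrite <- H0; auto.
Qed.

Inductive Ltyp : lctx -> ctx -> ctx -> nat -> nat -> nat -> nat -> Prop :=
| Lt_nil G G' : ctx_eq G G' -> Ltyp [] G G' 0 0 0 0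
| Lt_cons q w L Gi Gm G' D B b e m f ep mp fp bw ew mw fw :
    Ltyp L Gi Gm b e m f -> ptyp (ctx_restr Gm (np q)) q B ep mp fp ->
    mtyp D w B bw ew mw fw -> ctx_eq G' (ctx_and (ctx_rem Gm (np q)) D) ->
    Ltyp ((q, w) :: L) Gi G' (b + bw) (e + ew + ep) (m + mw + mp) (f + fw + fp).

Lemma plug_inv L : forall G X s b e m f, typ G (plug L X) s b e m f ->
  exists Gx bx ex mx fx bl el ml fl, typ Gx X s bx ex mx fx /\ Ltyp L Gx G bl el ml fl /\
    b = bx + bl /\ e = ex + el /\ m = mx + ml /\ f = fx + fl.
Proof.
  induction L as [|[q w] L IH]; intros G X s b e m f H; simpl in H.
  - exists G, b, e, m, f, 0, 0, 0, 0; repeat split; auto; try lia. constructor; reflexivity.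
  - apply sub_inv in H as (Gt&D&A&bt&et&mt&ft&ep&mp&fp&bu&eu&mu&fu&H1&H2&H3&H4&->&->&->&->).
    destruct (IH _ _ _ _ _ _ _ H1) as (Gx&bx&ex&mx&fx&bl&el&ml&fl&K1&K2&->&->&->&->).
    exists Gx, bx, ex, mx, fx, (bl + bu), (el + eu + ep), (ml + mu + mp), (fl + fu + fp).
    repeat split; try lia; auto.
    econstructor; eauto.
Qed.

Lemma plug_build L Gy G' bl el ml fl : Ltyp L Gy G' bl el ml fl ->
  forall Y s by' ey my fy, typ Gy Y s by' ey my fy ->
  typ G' (plug L Y) s (by' + bl) (ey + el) (my + ml) (fy + fl).
Proof.
  induction 1; intros Y s by' ey my fy HY; simpl.
  - rewrite <- H. eapply typ_cnt; eauto; lia.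
  - rewrite H2. eapply typ_cnt; [econstructor; eauto| lia..].
Qed.

Lemma Ltyp_split L Gx G bl el ml fl : Ltyp L Gx G bl el ml fl ->
  forall H Gy, ctx_eq Gx (ctx_and (ctx_shift (nbv L) 0 H) Gy) ->
  exists G', Ltyp L Gy G' bl el ml fl /\ ctx_eq G (ctx_and H G').
Proof.
  induction 1; intros Hc Gy HE; simpl in HE.
  - exists Gy; split; [constructor; reflexivity|]. rewrite <- H, HE. ctx_solve.
  - destruct (IHLtyp (ctx_shift (np q) 0 Hc) Gy) as [Gm' [HL HGm]].
    { rewrite HE. ctx_solve. }
    exists (ctx_and (ctx_rem Gm' (np q)) D); split.
    + econstructor; eauto.
      * rewrite HGm in H0.
        assert (E : ctx_eq (ctx_restr (ctx_and (ctx_shift (np q) 0 Hc) Gm') (np q)) (ctx_restr Gm' (np q))) by ctx_solve.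
        rewrite E in H0; exact H0.
      * reflexivity.
    + rewrite H2, HGm. ctx_solve.
Qed.

Lemma base_B L p r u G s b e m f :
  typ G (plug L (Sub r p (shift (nbv L) 0 u))) s b e m f ->
  exists b0 e0 m0 f0, typ G (App (plug L (Lam p r)) u) s b0 e0 m0 f0 /\
    b0 = b + 1 /\ e = e0 /\ m = m0.
Proof.
  intros H.
  destruct (plug_inv _ _ _ _ _ _ _ _ H) as (Gx&bx&ex&mx&fx&bl&el&ml&fl&HX&HL&->&->&->&->).
  apply sub_inv in HX as (Gr&Du'&A&bt&et&mt&ft&ep&mp&fp&bu&eu&mu&fu&Hr&Hp&Hu'&HGx&->&->&->&->).
  destruct (proj2 anti_shift _ _ _ _ _ _ _ Hu' (nbv L) 0 u eq_refl) as [D0 [Hu HD]].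
  destruct (Ltyp_split _ _ _ _ _ _ _ HL D0 (ctx_rem Gr (np p))) as [G' [HL' HG]].
  { rewrite HGx, HD. ctx_solve. }
  pose proof (plug_build _ _ _ _ _ _ _ HL' _ _ _ _ _ _ (ty_abs _ _ _ _ _ _ _ _ _ _ _ _ Hr Hp)) as HT.
  do 4 eexists; split.
  - rewrite HG. assert (E : ctx_eq (ctx_and D0 G') (ctx_and G' D0)) by ctx_solve.
    rewrite E. eapply ty_app; eauto.
  - repeat split; lia.
Qed.

Lemma base_M L p1 p2 t0 u1 u2 G s b e m f :
  typ G (plug L (Sub (Sub (shift (nbv L) (np p1 + np p2) t0) p1 (shift (np p2) 0 u1)) p2 u2)) s b e m f ->
  exists b0 e0 m0 f0, typ G (Sub t0 (PPair p1 p2) (plug L (Pair u1 u2))) s b0 e0 m0 f0 /\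
    b = b0 /\ e = e0 /\ m0 = m + 1.
Proof.
  intros H.
  destruct (plug_inv _ _ _ _ _ _ _ _ H) as (Gx&bx&ex&mx&fx&bl&el&ml&fl&HX&HL&->&->&->&->).
  apply sub_inv in HX as (Gx1&D2&A2&bt&et&mt&ft&ep&mp&fp&bu&eu&mu&fu&HX1&Hp2&Hu2&HGx&->&->&->&->).
  apply sub_inv in HX1 as (Gt&D1s&A1&bt'&et'&mt'&ft'&ep'&mp'&fp'&bu'&eu'&mu'&fu'&Ht&Hp1&Hu1s&HGx1&->&->&->&->).
  destruct (proj1 anti_shift _ _ _ _ _ _ _ Ht (nbv L) (np p1 + np p2) t0 eq_refl) as [Gt0 [Ht0 HGt]].
  destruct (proj2 anti_shift _ _ _ _ _ _ _ Hu1s (np p2) 0 u1 eq_refl) as [D1 [Hu1 HD1]].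
  destruct (Ltyp_split _ _ _ _ _ _ _ HL (ctx_rem Gt0 (np p1 + np p2)) (ctx_and D1 D2)) as [G' [HL' HG]].
  { rewrite HGx, HGx1, HGt, HD1. ctx_solve. }
  pose proof (plug_build _ _ _ _ _ _ _ HL' _ _ _ _ _ _ (ty_pair _ _ _ _ _ _ _ _ _ _ _ _ _ _ Hu1 Hu2)) as HT.
  pose proof (pat_x _ _ _ _ _ _ _ _ _ _ _ _ Hp1 Hp2) as HP.
  assert (E : ctx_eq (ctx_pjoin (np p1) (ctx_restr Gt (np p1)) (ctx_restr Gx1 (np p2))) (ctx_restr Gt0 (np p1 + np p2))).
  { rewrite HGx1, HGt, HD1. ctx_solve. }
  rewrite E in HP.
  do 4 eexists; split.
  - rewrite HG. assert (E2 : ctx_eq (ctx_and (ctx_rem Gt0 (np p1 + np p2)) G') (ctx_and (ctx_rem Gt0 (np (PPair p1 p2))) (ctx_and G' ctx_empty))) by (simpl; ctx_solve).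
    rewrite E2. eapply ty_match; eauto.
    econstructor; eauto. constructor.
  - repeat split; lia.
Qed.

Lemma base_E t0 u G s b e m f :
  typ G (subst0 t0 u) s b e m f ->
  exists b0 e0 m0 f0, typ G (Sub t0 PVar u) s b0 e0 m0 f0 /\
    b = b0 /\ e0 = e + 1 /\ m = m0.
Proof.
  intros H.
  destruct (proj1 anti_subst _ _ _ _ _ _ _ H H 0 u t0 eq_refl) as (G1&D&A&b1&e1&m1&f1&b2&e2&m2&f2&Ht&HA&Hu&HG&->&->&->&->).
  assert (HP : ptyp (ctx_restr G1 (np PVar)) PVar A 1 0 0).
  { eapply pat_eq; [apply pat_v| |reflexivity].
    intro i; unfold ctx_one, ctx_restr; destruct i; simpl; [symmetry; auto|reflexivity]. }
  do 4 eexists; split.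
  - rewrite HG. assert (E : ctx_eq (ctx_and (ctx_del 0 G1) (ctx_shift 0 0 D)) (ctx_and (ctx_rem G1 (np PVar)) D)) by (simpl; ctx_solve).
    rewrite E. eapply ty_match; eauto.
  - repeat split; lia.
Qed.

Definition rel k n b' e' m' b e m : Prop :=
  match k with
  | KB => b = b' + n /\ e' = e /\ m' = m
  | KE => b' = b /\ e = e' + n /\ m' = m
  | KM => b' = b /\ e' = e /\ m = m' + n
  end.

Definition base_step t k t' : Prop :=
 (k = KB /\ exists L p r u, t = App (plug L (Lam p r)) u /\ t' = plug L (Sub r p (shift (nbv L) 0 u))) \/
 (k = KE /\ exists t0 u, t = Sub t0 PVar u /\ t' = subst0 t0 u) \/
 (k = KM /\ exists L p1 p2 t0 u1 u2, t = Sub t0 (PPair p1 p2) (plug L (Pair u1 u2)) /\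
    t' = plug L (Sub (Sub (shift (nbv L) (np p1 + np p2) t0) p1 (shift (np p2) 0 u1)) p2 u2)).

Lemma hred_split t k t' : hred t k t' ->
 base_step t k t' \/
 (exists p a a', t = Lam p a /\ t' = Lam p a' /\ hred a k a') \/
 (exists a a' u, t = App a u /\ t' = App a' u /\ hred a k a') \/
 (exists a a' p u, t = Sub a p u /\ t' = Sub a' p u /\ hred a k a') \/
 (exists a p u u', t = Sub a p u /\ t' = Sub a p u' /\ p <> PVar /\ hred u k u').
Proof.
  unfold base_step.
  destruct t as [n|p a|a c|a c|a p c]; simpl; intros H.
  - destruct H.
  - destruct H as (a'&->&Hr). right; left; exists p, a, a'; auto.
  - destruct H.
  - destruct H as [(->&L&p&r&->&->)|(a'&->&Hr&_)].
    + left; left; split; auto; exists L, p, r, c; auto.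
    + right; right; left; exists a, a', c; auto.
  - destruct H as [(->&_&p1&p2&L&u1&u2&->&->&->)|[(->&_&->&->)|[(a'&->&Hr)|(_&Hp&c'&->&Hr)]]].
    + left; right; right; split; auto. exists L, p1, p2, a, u1, u2; auto.
    + left; right; left; split; auto; exists a, c; auto.
    + right; right; right; left; exists a, a', p, c; auto.
    + right; right; right; right; exists a, p, c, c'; auto.
Qed.

Lemma base_all G t t' s k b' e' m' f' : typ G t' s b' e' m' f' -> base_step t k t' ->
  exists b e m f, typ G t s b e m f /\ rel k 1 b' e' m' b e m.
Proof.
  intros Hd [(->&L&p&r&u&->&->)|[(->&t0&u&->&->)|(->&L&p1&p2&t0&u1&u2&->&->)]].
  - destruct (base_B _ _ _ _ _ _ _ _ _ _ Hd) as (b0&e0&m0&f0&H&?&?&?).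
    exists b0, e0, m0, f0; split; auto; simpl; lia.
  - destruct (base_E _ _ _ _ _ _ _ _ Hd) as (b0&e0&m0&f0&H&?&?&?).
    exists b0, e0, m0, f0; split; auto; simpl; lia.
  - destruct (base_M _ _ _ _ _ _ _ _ _ _ _ _ Hd) as (b0&e0&m0&f0&H&?&?&?).
    exists b0, e0, m0, f0; split; auto; simpl; lia.
Qed.

Lemma ptyp_pair_len G p A e m f : ptyp G p A e m f -> p <> PVar -> length A = 1.
Proof.
  induction 1; intros Hp; simpl; auto.
  - congruence.
  - rewrite <- (mteq_length _ _ H1); auto.
Qed.

Ltac split_hred Hd Hr :=
  destruct (hred_split _ _ _ Hr) as [Hb|[(p'&a&a'&->&Heq&Hr')|[(a&a'&v'&->&Heq&Hr')|[(a&a'&p'&v'&->&Heq&Hr')|(a&p'&v'&v''&->&Heq&Hne&Hr')]]]];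
  [ exact (base_all _ _ _ _ _ _ _ _ _ Hd Hb) | ..]; try discriminate Heq.

Lemma main :
 (forall G t' s b' e' m' f', typ G t' s b' e' m' f' -> typ G t' s b' e' m' f' -> forall t k, hred t k t' ->
    exists b e m f, typ G t s b e m f /\ rel k 1 b' e' m' b e m) /\
 (forall G t' A b' e' m' f', mtyp G t' A b' e' m' f' -> mtyp G t' A b' e' m' f' -> forall t k, hred t k t' ->
    exists b e m f, mtyp G t A b e m f /\ rel k (length A) b' e' m' b e m).
Proof.
  apply typ_mtyp_mut.
  - intros x s Hd t k Hr. split_hred Hd Hr.
  - intros G p t s A b e m f ep mp fp Ht IH Hp Hd t0 k Hr. split_hred Hd Hr.
    injection Heq as -> ->.
    destruct (IH Ht _ _ Hr') as (b0&e0&m0&f0&H&HR).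
    exists (b0+1), (e0+ep), (m0+mp), (f0+fp); split; [apply ty_abs; auto|].
    destruct k; simpl in *; lia.
  - intros G p t s b e m f Ht IH Hs Htt Hd t0 k Hr. split_hred Hd Hr.
    injection Heq as -> ->.
    destruct (IH Ht _ _ Hr') as (b0&e0&m0&f0&H&HR).
    exists b0, e0, m0, (f0+1); split; [apply ty_abs_p with (s := s); auto|].
    destruct k; simpl in *; lia.
  - intros G D t u A s bt et mt ft bu eu mu fu Ht IHt Hu IHu Hd t0 k Hr. split_hred Hd Hr.
    injection Heq as -> ->.
    destruct (IHt Ht _ _ Hr') as (b0&e0&m0&f0&H&HR).
    exists (b0+bu), (e0+eu), (m0+mu), (f0+fu); split; [eapply ty_app; eauto|].
    destruct k; simpl in *; lia.
  - intros G t u b e m f Ht IHt Hd t0 k Hr. split_hred Hd Hr.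
    injection Heq as -> ->.
    destruct (IHt Ht _ _ Hr') as (b0&e0&m0&f0&H&HR).
    exists b0, e0, m0, (f0+1); split; [apply ty_app_p; auto|].
    destruct k; simpl in *; lia.
  - intros G D t u A B bt et mt ft bu eu mu fu Ht IHt Hu IHu Hd t0 k Hr. split_hred Hd Hr.
  - intros t u Hd t0 k Hr. split_hred Hd Hr.
  - intros G D t p u s A bt et mt ft ep mp fp bu eu mu fu Ht IHt Hp Hu IHu Hd t0 k Hr. split_hred Hd Hr.
    + injection Heq as -> -> ->.
      destruct (IHt Ht _ _ Hr') as (b0&e0&m0&f0&H&HR).
      exists (b0+bu), (e0+eu+ep), (m0+mu+mp), (f0+fu+fp); split; [eapply ty_match; eauto|].
      destruct k; simpl in *; lia.
    + injection Heq as -> -> ->.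
      destruct (IHu Hu _ _ Hr') as (b0&e0&m0&f0&H&HR).
      rewrite (ptyp_pair_len _ _ _ _ _ _ Hp Hne) in HR.
      exists (bt+b0), (et+e0+ep), (mt+m0+mp), (ft+f0+fp); split; [eapply ty_match; eauto|].
      destruct k; simpl in *; lia.
  - intros G G' t s s' b e m f Ht IH HG Hs Hd t0 k Hr.
    destruct (IH Ht _ _ Hr) as (b0&e0&m0&f0&H&HR).
    exists b0, e0, m0, f0; split; auto. eapply ty_eq; eauto.
  - intros t Hd t0 k Hr. exists 0, 0, 0, 0; split; [constructor|]. destruct k; simpl; lia.
  - intros G D t s A b1 e1 m1 f1 b2 e2 m2 f2 Ht IHt HA IHA Hd t0 k Hr.
    destruct (IHt Ht _ _ Hr) as (b0&e0&m0&f0&H&HR).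
    destruct (IHA HA _ _ Hr) as (b3&e3&m3&f3&H3&HR3).
    exists (b0+b3), (e0+e3), (m0+m3), (f0+f3); split; [econstructor; eauto|].
    destruct k; simpl in *; lia.
  - intros G G' t A A' b e m f HA IH HG HAA Hd t0 k Hr.
    destruct (IH HA _ _ Hr) as (b0&e0&m0&f0&H&HR).
    rewrite (mteq_length _ _ HAA) in HR.
    exists b0, e0, m0, f0; split; auto. eapply many_eq; eauto.
Qed.

Theorem lemma9 (G : ctx) (t t' : term) (s : ty) (k : kind)
  (b' e' m' f' : nat) :
  typ G t' s b' e' m' f' ->
  hred t k t' ->
  exists b e m f : nat,
    typ G t s b e m f /\
    match k with
    | KB => b = b' + 1 /\ e' = e /\ m' = m
    | KE => b' = b /\ e = e' + 1 /\ m' = m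
    | KM => b' = b /\ e' = e /\ m = m' + 1
    end.
Proof.
  intros H Hr.
  destruct (proj1 main _ _ _ _ _ _ _ H H _ _ Hr) as (b&e&m&f&Ht&HR).
  exists b, e, m, f; split; [exact Ht| destruct k; exact HR].
Qed.
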